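(* Let $n,k\geq 1$ and let ${\bf m}=(m_1,\dots,m_k)$ be an array of nonnegative integers. For every permutation $\tau\in\mathfrak{S}_{k-1}$ there exists a bijection $\mathfrak{a}\mapsto\mathfrak{b}$ from $\mathcal{A}_n^k({\bf m})$ onto $\mathcal{A}_n^k({\bf m}')$, where ${\bf m}'=(m_{\tau(1)},\dots,m_{\tau(k-1)},m_k)$, such that $\mathrm{DES}(\mathfrak{a})=\mathrm{DES}(\mathfrak{b})$, $\mathrm{DEZ}(\mathfrak{a})=\mathrm{DEZ}(\mathfrak{b})$ and $\mathrm{Der}(\mathfrak{a})=\mathrm{Der}(\mathfrak{b})$.
   Context: $\mathfrak{S}_n$ is the set of permutations of $[n]=\{1,\dots,n\}$; $\mathrm{FIX}(\pi)=\{i:\pi(i)=i\}$. For $k\ge1$, a $k$-arrangement of $[n]$ is a pair $\mathfrak{a}=(\pi,\phi)$ with $\pi\in\mathfrak{S}_n$ and $\phi:\mathrm{FIX}(\pi)\to\{-1,\dots,-k\}$ arbitrary; $\mathcal{A}_n^k$ is the set of them. The positive reduction of an integer word replaces every occurrence of its $i$-th smallest positive letter by $i$, for all $i$ (negative letters unchanged). The derangement form $\mathrm{df}_k(\mathfrak{a})$ is obtained from $\pi(1)\cdots\pi(n)$ by replacing $\pi(i)$ with $\phi(i)$ for each $i\in\mathrm{FIX}(\pi)$ and then applying positive reduction; the permutation form $\mathrm{pf}_k(\mathfrak{a})$ is obtained likewise, replacing only for those $i\in\mathrm{FIX}(\pi)$ with $\phi(i)\neq-k$. For an integer word $w=w_1\cdots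 w_n$, $\mathrm{DES}(w)=\{i\in[n-1]:w_i>w_{i+1}\}$, and $\mathrm{Pos}(w)$ is the subword of positive letters. $\mathrm{DES}(\mathfrak{a})=\mathrm{DES}(\mathrm{pf}_k(\mathfrak{a}))$, $\mathrm{DEZ}(\mathfrak{a})=\mathrm{DES}(\mathrm{df}_k(\mathfrak{a}))$, $\mathrm{Der}(\mathfrak{a})=\mathrm{Pos}(\mathrm{df}_k(\mathfrak{a}))$, $\mathrm{fix}_i(\mathfrak{a})=|\{j\in\mathrm{FIX}(\pi):\phi(j)=-i\}|$, and $\mathcal{A}_n^k({\bf m})=\{\mathfrak{a}\in\mathcal{A}_n^k:\mathrm{fix}_i(\mathfrak{a})=m_i,\ 1\le i\le k\}$. *)

(* Defs.v *)
From mathcomp Require Import all_boot all_order all_algebra all_fingroup.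
From mathcomp Require Import ssrint.
Set Implicit Arguments. Unset Strict Implicit. Unset Printing Implicit Defensive.
Import Order.TTheory GRing.Theory Num.Theory.

(* [n] is encoded by 'I_n (value i stands for i+1); the label -(j+1) for
   j : 'I_k stands for the negative letter -1,...,-k. *)

(* Raw pairs (pi, phi): phi i = Some j means phi(i) = -(j+1); phi i = None
   means i is not in FIX(pi). *)
Definition arr (n k : nat) := ({perm 'I_n} * {ffun 'I_n -> option 'I_k})%type.

Definition Arr (n k : nat) : {set arr n k} :=
  [set a : arr n k | [forall i, (a.1 i == i) == (a.2 i != None)]].

Definition fixc (n k : nat) (a : arr n k) (j : 'I_k) : nat :=
  #|[set i | a.2 i == Some j]|.

Definition Arr_m (n k : nat) (m : 'I_k -> nat) : {set arr n k} :=
  [set a in Arr n k | [forall j, fixc a j == m j]].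

Definition pos_red (w : seq int) : seq int :=
  [seq (if (0 < x)%R
        then Posz (size [seq y <- undup w | (0 < y)%R && (y <= x)%R])
        else x) | x <- w].

(* word pi(1)...pi(n) with pi(i) replaced by phi(i) for fixed i with
   rep (phi i) true, before positive reduction *)
Definition raw_word (n k : nat) (rep : 'I_k -> bool) (a : arr n k) : seq int :=
  [seq (match a.2 i with
        | Some j => if rep j then (- Posz j.+1)%R else Posz (a.1 i).+1
        | None => Posz (a.1 i).+1
        end) | i <- enum 'I_n].

Definition df (n k : nat) (a : arr n k) : seq int :=
  pos_red (raw_word (fun _ => true) a).

Definition pf (n k : nat) (a : arr n k) : seq int :=
  pos_red (raw_word (fun j : 'I_k => j.+1 != k) a).

(* DES(w) = {i in [n-1] : w_i > w_{i+1}} (1-indexed positions) *)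
Definition DESw (w : seq int) : seq nat :=
  [seq i <- iota 1 (size w).-1 | (nth 0%R w i < nth 0%R w i.-1)%R].

Definition Posw (w : seq int) : seq int := [seq x <- w | (0 < x)%R].

Definition DES (n k : nat) (a : arr n k) := DESw (pf a).
Definition DEZ (n k : nat) (a : arr n k) := DESw (df a).
Definition Der (n k : nat) (a : arr n k) := Posw (df a).

(* m' = (m_{tau(1)}, ..., m_{tau(k-1)}, m_k) *)
Definition perm_arr (k : nat) (tau : {perm 'I_k.-1}) (m : 'I_k -> nat)
  : 'I_k -> nat :=
  fun i => match (insub (val i) : option 'I_k.-1) with
           | Some j => m (widen_ord (leq_pred k) (tau j))
           | None => m i
           end.

(* Main.v *)
Require Import Defs.
From mathcomp Require Import all_boot all_order all_algebra all_fingroup ssrint.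
From mathcomp Require Import zify.
From Stdlib Require Import FunctionalExtensionality.
Set Implicit Arguments. Unset Strict Implicit. Unset Printing Implicit Defensive.

Section Word.
Variables (n lx : nat) (w : nat -> nat).

Definition isA i := (i < n) && (w i == lx).
Definition isB i := (i < n) && (w i == lx.+1).
Definition AB i := isA i || isB i.
Definition asc i := isA i && isB i.+1.
Definition forced i := asc i || (0 < i) && asc i.-1.
Definition free i := AB i && ~~ forced i.

Fixpoint st i := if i is j.+1 then (if free j then st j else i) else 0.
Fixpoint enf f i := if f is f'.+1 then (if free i.+1 then enf f' i.+1 else i) else i.
Definition en i := enf n i.
Definition rr i := if free i then st i + en i - i else i.
Definition w' i := if free i then (if w (rr i) == lx then lx.+1 else lx) else w i.

Lemma free_lt i : free i -> i < n.
Proof. by rewrite /free /AB /isA /isB; case: (i < n). Qed.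

Lemma free_AB i : free i -> (w i == lx) || (w i == lx.+1).
Proof. by rewrite /free /AB /isA /isB; case: (i < n) => //= /andP[]. Qed.

Lemma st_le i : st i <= i.
Proof. elim: i => //= i IH; case: (free i) => //; lia. Qed.

Lemma st_free i t : st i <= t < i -> free t.
Proof.
elim: i => [|i IH] /=; first lia.
case: ifP => Hf; last lia.
move=> Ht; have [->//|ne] := eqVneq t i; apply: IH; lia.
Qed.

Lemma st_stop i : 0 < st i -> ~~ free (st i).-1.
Proof. elim: i => //= i IH; case: ifP => [_ //|Hf _]; by rewrite /= Hf. Qed.

Lemma st_char i j : j <= i -> (forall t, j <= t < i -> free t) ->
  (j = 0 \/ ~~ free j.-1) -> st i = j.
Proof.
elim: i j => [|i IH] j /=; first by case: j.
move=> Hji Hf Hs.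
have [Ej|Ej] := eqVneq j i.+1.
  case: Hs => [|Hs]; first by rewrite Ej.
  by move: Hs; rewrite Ej /= => /negbTE ->.
rewrite Hf; last lia.
apply: IH => //; first lia.
move=> t Ht; apply: Hf; lia.
Qed.

Lemma enf_ge f i : i <= enf f i.
Proof. elim: f i => //= f IH i; case: ifP => // _; have := IH i.+1; lia. Qed.

Lemma enf_free f i t : i < t <= enf f i -> free t.
Proof.
elim: f i => /= [|f IH] i; first lia.
case: ifP => Hf; last lia.
move=> Ht; have [->//|ne] := eqVneq t i.+1; apply: (IH i.+1); lia.
Qed.

Lemma enf_stop f i : n - i <= f -> ~~ free (enf f i).+1.
Proof.
elim: f i => /= [|f IH] i Hf.
  by apply/negP => /free_lt; lia.
case: ifP => Hfr; last by rewrite Hfr.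
apply: IH; lia.
Qed.

Lemma enf_char f i j : j - i <= f -> i <= j -> (forall t, i < t <= j -> free t) ->
  ~~ free j.+1 -> enf f i = j.
Proof.
elim: f i => /= [|f IH] i Hf Hij Ht Hs; first lia.
case: ifP => Hfr.
  have [E|ne] := eqVneq i j; first by move: Hs; rewrite -E Hfr.
  apply: IH => //; try lia.
  move=> t Htt; apply: Ht; lia.
have [//|ne] := eqVneq i j.
by move: Hfr; rewrite Ht //; lia.
Qed.

Lemma en_ge i : i <= en i. Proof. exact: enf_ge. Qed.
Lemma en_free i t : i < t <= en i -> free t. Proof. exact: enf_free. Qed.
Lemma en_stop i : ~~ free (en i).+1. Proof. apply: enf_stop; lia. Qed.
Lemma en_char i j : i <= j -> (forall t, i < t <= j -> free t) ->
  ~~ free j.+1 -> j < n -> en i = j.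
Proof. move=> *; apply: enf_char => //; lia. Qed.

Lemma run_free i t : free i -> st i <= t <= en i -> free t.
Proof.
move=> Hi Ht.
case: (ltngtP t i) => [Hlt|Hgt|->//]; first by apply: (st_free (i:=i)); lia.
apply: (en_free (i:=i)); lia.
Qed.

Lemma en_lt i : free i -> en i < n.
Proof. move=> Hi; apply: free_lt; apply: (run_free Hi); have := st_le i; have := en_ge i; lia. Qed.

Lemma run_st i t : free i -> st i <= t <= en i -> st t = st i.
Proof.
move=> Hi Ht; apply: st_char; first lia.
  move=> u Hu; apply: (run_free Hi); lia.
case E: (st i) => [|s]; [by left | right].
by rewrite -E; apply: st_stop; rewrite E.
Qed.

Lemma run_en i t : free i -> st i <= t <= en i -> en t = en i.
Proof.
move=> Hi Ht; apply: en_char; first lia.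
- move=> u Hu; apply: (run_free Hi); lia.
- exact: en_stop.
- exact: en_lt.
Qed.

Lemma rr_free i : free (rr i) = free i.
Proof.
rewrite /rr; case: ifP => // Hi; apply: (run_free Hi).
have := st_le i; have := en_ge i; lia.
Qed.

Lemma rrK i : rr (rr i) = i.
Proof.
case: (boolP (free i)) => Hi; last by rewrite /rr (negbTE Hi) (negbTE Hi).
have Hf : free (st i + en i - i) by have := rr_free i; rewrite /rr Hi.
rewrite /rr Hi Hf.
have H1 := st_le i; have H2 := en_ge i.
have Ht : st i <= st i + en i - i <= en i by lia.
rewrite (run_st (t:=st i + en i - i) Hi Ht) (run_en (t:=st i + en i - i) Hi Ht); lia.
Qed.

Lemma rr_lt i : i < n -> rr i < n.
Proof. by rewrite /rr; case: ifP => // Hi; have := en_lt Hi; have := st_le i; lia. Qed.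

Lemma rr_succ i : free i -> free i.+1 -> rr i = (rr i.+1).+1.
Proof.
move=> Hi Hi1; rewrite /rr Hi Hi1 /=.
have H1 : en i = en i.+1.
  apply: en_char.
  - have := en_ge i.+1; lia.
  - move=> t Ht; case: (ltngtP t i.+1) => [Hlt|Hgt|->//]; [lia | apply: (en_free (i:=i.+1)); lia].
  - exact: en_stop.
  - exact: en_lt.
rewrite H1 /= Hi; have := en_ge i.+1; have := st_le i; lia.
Qed.


Lemma AB_E i : AB i = (i < n) && ((w i == lx) || (w i == lx.+1)).
Proof. by rewrite /AB /isA /isB; case: (i < n). Qed.

Lemma free_nasc i : free i -> ~~ asc i.
Proof. by rewrite /free /forced; case: (asc i); rewrite ?andbF. Qed.

Lemma free_nasc1 i : free i.+1 -> ~~ asc i.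
Proof. by rewrite /free /forced /=; case: (asc i); rewrite ?orbT ?andbF. Qed.

Lemma nfree_forced i : AB i -> ~~ free i -> forced i.
Proof. by rewrite /free => ->; rewrite negbK. Qed.

Lemma w'_nf i : ~~ free i -> w' i = w i.
Proof. by rewrite /w' => /negbTE ->. Qed.

Lemma free_rrAB i : free i -> (w (rr i) == lx) || (w (rr i) == lx.+1).
Proof. by move=> H; apply: free_AB; rewrite rr_free. Qed.

Lemma w'_f i : free i -> (w' i == lx) || (w' i == lx.+1).
Proof. by move=> H; rewrite /w' H; case: (w (rr i) == lx); rewrite eqxx ?orbT. Qed.

Lemma AB_w' i : ((i < n) && ((w' i == lx) || (w' i == lx.+1))) = AB i.
Proof.
rewrite AB_E; case: (boolP (free i)) => H; last by rewrite w'_nf.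
by rewrite w'_f // (free_AB H).
Qed.

Lemma W2 i : AB i -> AB i.+1 -> (w' i < w' i.+1) = (w i < w i.+1).
Proof.
rewrite !AB_E => /andP[Hi ABi] /andP[Hi1 ABi1].
case: (boolP (free i)) => fi; case: (boolP (free i.+1)) => fi1.
- have := free_nasc fi; rewrite /asc /isA /isB => na.
  rewrite /w' fi fi1 (rr_succ fi fi1).
  have fj : free (rr i.+1) by rewrite rr_free.
  have fj1 : free (rr i.+1).+1 by rewrite -(rr_succ fi fi1) rr_free.
  have := free_nasc1 fj1; rewrite /asc /isA /isB => nb.
  have := free_lt fj1; have := free_AB fj; have := free_AB fj1.
  move: na nb ABi ABi1.
  case: (w (rr i.+1) =P lx) => e1; case: (w (rr i.+1).+1 =P lx) => e2; lia.
- have := nfree_forced (i := i.+1); rewrite AB_E Hi1 ABi1 => /(_ isT fi1).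
  have := free_nasc fi.
  rewrite /forced /asc /isA /isB /= (w'_nf fi1) => na.
  have := w'_f fi. move: ABi ABi1 na. lia.
- have := nfree_forced (i := i); rewrite AB_E Hi ABi => /(_ isT fi).
  have := free_nasc1 fi1.
  rewrite /forced /asc /isA /isB /= (w'_nf fi) => na.
  have := w'_f fi1. move: ABi ABi1 na. destruct i as [|i']; simpl; lia.
- by rewrite !w'_nf.
Qed.

End Word.

Section Inv.
Variables (n lx : nat) (w : nat -> nat).

Lemma asc_E (v : nat -> nat) i :
  asc n lx v i = AB n lx v i && AB n lx v i.+1 && (v i < v i.+1).
Proof.
rewrite !AB_E /asc /isA /isB.
case: (v i =P lx) => e1; case: (v i.+1 =P lx.+1) => e2; case: (v i =P lx.+1) => e3;
  case: (v i.+1 =P lx) => e4; rewrite ?andbF ?andbT /=; try lia.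
Qed.

Let v := w' n lx w.

Lemma AB_v i : AB n lx v i = AB n lx w i.
Proof. by rewrite AB_E AB_w'. Qed.

Lemma asc_v i : asc n lx v i = asc n lx w i.
Proof.
rewrite !asc_E !AB_v.
case: (boolP (AB n lx w i)) => // h1; case: (boolP (AB n lx w i.+1)) => // h2.
by rewrite W2.
Qed.

Lemma free_v i : free n lx v i = free n lx w i.
Proof. by rewrite /free /forced !asc_v AB_v. Qed.

Lemma st_v i : st n lx v i = st n lx w i.
Proof. by elim: i => //= i ->; rewrite free_v. Qed.

Lemma enf_v f i : enf n lx v f i = enf n lx w f i.
Proof. by elim: f i => //= f IH i; rewrite free_v IH. Qed.

Lemma rr_v i : rr n lx v i = rr n lx w i.
Proof. by rewrite /rr /en free_v st_v enf_v. Qed.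

Lemma w'K i : w' n lx v i = w i.
Proof.
rewrite {1}/w' free_v rr_v.
case: (boolP (free n lx w i)) => fi; last by rewrite /v w'_nf.
rewrite /v /w' rr_free fi rrK.
have := free_AB fi; case: (w i =P lx) => [->|e] /=.
  by case: (lx.+1 =P lx) => //; lia.
by move/eqP => ->; rewrite eqxx.
Qed.

End Inv.

Lemma count_split (T : Type) (a b : pred T) (s : seq T) :
  count a s = count (fun x => a x && b x) s + count (fun x => a x && ~~ b x) s.
Proof. by elim: s => //= x s ->; case: (a x); case: (b x) => /=; lia. Qed.

Section Count.
Variables (n lx : nat) (w : nat -> nat).
Let v := w' n lx w.
Let s := iota 0 n.

Lemma count_rr d :
  count (fun i => (w (rr n lx w i) == d) && free n lx w i) s =
  count (fun i => (w i == d) && free n lx w i) s.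
Proof.
rewrite (@eq_count _ _ (preim (rr n lx w) (fun i => (w i == d) && free n lx w i))); last first.
  by move=> i /=; rewrite rr_free.
rewrite -count_map.
suff /seq.permP H : perm_eq (map (rr n lx w) s) s by apply: H.
apply: uniq_perm.
- by rewrite (map_inj_uniq (can_inj (@rrK n lx w))) iota_uniq.
- exact: iota_uniq.
move=> x; rewrite mem_iota /=; apply/mapP/idP.
  by case=> y; rewrite mem_iota => /= Hy ->; apply: rr_lt.
by move=> Hx; exists (rr n lx w x); rewrite ?rrK // mem_iota /= rr_lt.
Qed.

Lemma count_asc :
  count (asc n lx w) s = count (fun i => (0 < i) && asc n lx w i.-1) s.
Proof.
rewrite /s; case: n => // m.
have E1 : iota 0 m.+1 = iota 0 m ++ [:: m] by rewrite -addn1 iotaD.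
have E2 : iota 1 m = map S (iota 0 m).
  by rewrite -[1]addn0 iotaDl; apply: eq_map => i; rewrite add1n.
rewrite {1}E1 count_cat /= E2 count_map /= /asc /isB ltnn !andbF /= addn0 add0n.
by rewrite addn0; apply: eq_count.
Qed.


End Count.

Definition sw lx c := if c == lx then lx.+1 else if c == lx.+1 then lx else c.

Section Count2.
Variables (n lx : nat) (w : nat -> nat).
Let s := iota 0 n.

Lemma NF_A : count (fun i => (w i == lx) && ~~ free n lx w i) s = count (asc n lx w) s.
Proof.
apply: eq_in_count => i; rewrite mem_iota /= add0n => Hi.
rewrite /free /forced /AB /asc /isA /isB Hi /=.
case: i Hi => [|i] Hi /=; case: (w _ =P lx) => e1 //=; case: (w _ =P _) => e2 //=; 
  rewrite ?andbF ?andbT //=; try lia.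
Qed.

Lemma NF_B : count (fun i => (w i == lx.+1) && ~~ free n lx w i) s =
  count (fun i => (0 < i) && asc n lx w i.-1) s.
Proof.
apply: eq_in_count => i; rewrite mem_iota /= add0n => Hi.
rewrite /free /forced /AB /asc /isA /isB Hi /=.
case: i Hi => [|i] Hi /=; case: (w _ =P lx.+1) => e1 //=; try case: (w _ =P _) => e2 //=;
  rewrite ?andbF ?andbT //=; try lia.
Qed.

Lemma NF_AB : count (fun i => (w i == lx) && ~~ free n lx w i) s =
  count (fun i => (w i == lx.+1) && ~~ free n lx w i) s.
Proof. by rewrite NF_A NF_B count_asc. Qed.

Lemma count_w' c : count (fun i => w' n lx w i == c) s = count (fun i => w i == sw lx c) s.
Proof.
rewrite (count_split _ (free n lx w)) [RHS](count_split _ (free n lx w)).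
congr (_ + _).
  rewrite -count_rr; apply: eq_count => i /=.
  case: (boolP (free n lx w i)) => fi; rewrite ?andbF ?andbT //.
  rewrite /w' fi; have := free_rrAB fi; rewrite /sw.
  case: (w _ =P lx) => e1; case: (c =P lx) => e2; case: (c =P lx.+1) => e3 /=; try lia.
rewrite (@eq_count _ _ (fun i => (w i == c) && ~~ free n lx w i)); last first.
  by move=> i /=; case: (boolP (free n lx w i)) => fi; rewrite ?andbF ?andbT // w'_nf.
rewrite /sw; case: (c =P lx) => [->|e1]; first exact: NF_AB.
case: (c =P lx.+1) => [->|e2] //; by rewrite NF_AB.
Qed.

End Count2.
Import Order.TTheory GRing.Theory Num.Theory.
Section PR.
Local Open Scope ring_scope.

Definition Rr (x y : int) := (x == y) || ((x < 0) && (y < 0)).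

Lemma filter_R (T : Type) (e : seq T) (g1 g2 : T -> int) (P : pred int) :
  (forall o, Rr (g1 o) (g2 o)) -> (forall z, P z -> 0 < z) ->
  filter P (map g1 e) = filter P (map g2 e).
Proof.
move=> HR HP; elim: e => //= o e ->.
case/orP: (HR o) => [/eqP -> //|/andP[h1 h2]].
case E1: (P (g1 o)); first by have := HP _ E1; rewrite ltNge ltW.
case E2: (P (g2 o)); first by have := HP _ E2; rewrite ltNge ltW.
by [].
Qed.

Definition hh (s : seq int) (x : int) : int :=
  if 0 < x then Posz (size [seq y <- undup s | (0 < y) && (y <= x)]) else x.

Lemma pos_redE (T : Type) (e : seq T) (g : T -> int) :
  pos_red (map g e) = map (fun o => hh (map g e) (g o)) e.
Proof. by rewrite /pos_red -map_comp. Qed.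

Lemma hh_eq (T : Type) (e : seq T) (g1 g2 : T -> int) x :
  (forall o, Rr (g1 o) (g2 o)) -> hh (map g1 e) x = hh (map g2 e) x.
Proof.
move=> HR; rewrite /hh; case: ifP => // _.
rewrite !filter_undup (filter_R _ HR) //.
by move=> z /andP[].
Qed.

Lemma hh_neg s x : x <= 0 -> hh s x = x.
Proof. by rewrite /hh leNgt => /negbTE ->. Qed.

Lemma hh_nn s x : 0 < x -> 0 <= hh s x.
Proof. by rewrite /hh => ->. Qed.

Lemma DESw_map n (e1 e2 : 'I_n -> int) :
  (forall o1 o2 : 'I_n, val o2 = (val o1).+1 -> (e1 o2 < e1 o1) = (e2 o2 < e2 o1)) ->
  DESw (map e1 (enum 'I_n)) = DESw (map e2 (enum 'I_n)).
Proof.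
move=> H; rewrite /DESw !size_map; apply: eq_in_filter => i.
rewrite mem_iota -enumT size_enum_ord => /andP[h1 h2].
have Hi : (i < n)%N by lia.
have Hi' : (i.-1 < n)%N by lia.
rewrite !(nth_map (Ordinal Hi)) -?enumT ?size_enum_ord //.
apply: H => /=; rewrite !nth_enum_ord //; lia.
Qed.
End PR.
Import Order.TTheory GRing.Theory Num.Theory.

Section Adj.
Variables (n k : nat) (x y : 'I_k.-1).
Hypothesis Hxy : val y = (val x).+1.
Let lx := val x.
Let wx : 'I_k := widen_ord (leq_pred k) x.
Let wy : 'I_k := widen_ord (leq_pred k) y.

Lemma lx_lt : lx.+1 < k.-1.
Proof. by rewrite /lx -Hxy ltn_ord. Qed.

Definition code (a : arr n k) (i : nat) : nat :=
  if (insub i : option 'I_n) is Some o then (if a.2 o is Some j then val j else k) else k.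

Lemma codeE a (o : 'I_n) : code a o = if a.2 o is Some j then val j else k.
Proof. by rewrite /code valK. Qed.

Lemma code_out a i : n <= i -> code a i = k.
Proof. by move=> h; rewrite /code insubF // ltnNge h. Qed.

Definition fa (a : arr n k) : arr n k :=
  (a.1, [ffun o : 'I_n => if free n lx (code a) o
     then Some (if code a (rr n lx (code a) o) == lx then wy else wx) else a.2 o]).

Lemma code_fa a : code (fa a) = w' n lx (code a).
Proof.
apply: functional_extensionality => i.
case: (ltnP i n) => Hi; last first.
  rewrite code_out // w'_nf ?code_out //; apply/negP => /free_lt; lia.
have -> : i = val (Ordinal Hi) by [].
rewrite codeE ffunE /w'; case: ifP => Hf; last by rewrite codeE.
by case: ifP.
Qed.

Lemma AB_some a (o : 'I_n) : AB n lx (code a) o ->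
  exists2 j, a.2 o = Some j & val j = code a o.
Proof.
rewrite AB_E codeE => /andP[_]; case: (a.2 o) => [j|] /=; first by exists j.
have := lx_lt; lia.
Qed.

Lemma faK a : fa (fa a) = a.
Proof.
rewrite {1}/fa code_fa; apply: injective_projections => //=.
apply/ffunP => o; rewrite !ffunE free_v rr_v.
case: ifP => Hf; first last. by rewrite Hf.
rewrite /w' rr_free Hf rrK.
have [j Hj Hc] := AB_some (proj1 (andP Hf)).
rewrite Hj; congr Some.
move: Hc; rewrite /= => Hc.
case: (code _ o =P lx) => e /=.
  case: (lx.+1 =P lx) => [|_]; first lia.
  by apply: val_inj; rewrite /= Hc e.
rewrite eqxx; apply: val_inj; rewrite /= Hc Hxy.
by have := free_AB Hf; move: e; rewrite /lx; case: eqP => //= _ _ /eqP.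
Qed.

Lemma fixcE a j : fixc a j = count (fun i => code a i == val j) (iota 0 n).
Proof.
rewrite /fixc cardsE cardE /enum_mem size_filter -val_enum_ord count_map enumT.
apply: eq_count => o /=; rewrite codeE unfold_in /=; case: (a.2 o) => [j'|] /=.
  by rewrite val_eqE.
by case: eqP => // e; have := ltn_ord j; rewrite -e ltnn.
Qed.

Lemma sw_t j : sw lx (val j) = val (tperm wx wy j).
Proof.
rewrite permE /= /sw -!val_eqE /= -/lx Hxy.
rewrite -/lx; case: eqP => _ /=; first by rewrite Hxy. by case: eqP.
Qed.

Lemma fixc_fa a j : fixc (fa a) j = fixc a (tperm wx wy j).
Proof. by rewrite !fixcE code_fa count_w' sw_t. Qed.

Lemma Arr_fa a : (fa a \in Arr n k) = (a \in Arr n k).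
Proof.
rewrite !inE; apply: eq_forallb => o; rewrite ffunE /=; case: ifP => // Hf.
by have [j -> _] := AB_some (proj1 (andP Hf)).
Qed.

Lemma perm_arr_t m j : perm_arr (tperm x y) m j = m (tperm wx wy j).
Proof.
rewrite /perm_arr; case: insubP => [j' Hlt Hv|Hge].
  congr m; apply: val_inj => /=; rewrite !permE /= -!val_eqE /= Hv.
  by do 2 case: ifP => //=.
rewrite permE /= -!val_eqE /=.
have := ltn_ord x; have := ltn_ord y; move: Hge; rewrite -ltnNge => Hge.
case: eqP => [e|_]; first by simpl in *; lia.
case: eqP => [e|_] //; simpl in *; lia.
Qed.

Lemma fa_Arr_m m a : a \in Arr_m n m -> fa a \in Arr_m n (perm_arr (tperm x y) m).
Proof.
have := Arr_fa a; rewrite !inE => -> /andP[-> /forallP H] /=; apply/forallP => j.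
by rewrite fixc_fa perm_arr_t.
Qed.


Local Open Scope ring_scope.

Definition rwf (rep : 'I_k -> bool) (a : arr n k) (o : 'I_n) : int :=
  match a.2 o with
  | Some j => if rep j then (- Posz j.+1)%R else Posz (a.1 o).+1
  | None => Posz (a.1 o).+1
  end.

Lemma raw_wordE rep a : raw_word rep a = map (rwf rep a) (enum 'I_n).
Proof. by []. Qed.

Variable rep : 'I_k -> bool.
Hypothesis Hrep : forall j : 'I_k, (val j < k.-1)%N -> rep j.

Lemma F1 a (o : 'I_n) : AB n lx (code a) o -> rwf rep a o = - Posz (code a o).+1.
Proof.
move=> H; have [j Hj Hc] := AB_some H; rewrite /rwf Hj Hrep ?Hc //.
move: H; rewrite AB_E -Hc => /andP[_]; have := lx_lt; lia.
Qed.

Lemma F1' a (o : 'I_n) : AB n lx (code a) o -> rwf rep (fa a) o = - Posz (w' n lx (code a) o).+1.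
Proof. by move=> H; rewrite F1 code_fa // AB_v. Qed.

Lemma F2 a (o : 'I_n) : ~~ AB n lx (code a) o -> rwf rep (fa a) o = rwf rep a o.
Proof.
move=> H; rewrite /rwf /fa /= ffunE ifF //.
by apply/negbTE; apply: contra H; rewrite /free => /andP[].
Qed.

Lemma F3 a (o : 'I_n) : ~~ AB n lx (code a) o -> rwf rep a o < 0 ->
  (rwf rep a o != - Posz lx.+1) && (rwf rep a o != - Posz lx.+2).
Proof.
rewrite AB_E codeE ltn_ord /= /rwf.
case: (a.2 o) => [j|] //; case: (rep j) => //= H _.
by rewrite !eqr_opp !eqz_nat !eqSS; move: H; case: eqP; case: eqP.
Qed.

Lemma stat_rep a :
  DESw (pos_red (raw_word rep a)) = DESw (pos_red (raw_word rep (fa a))) /\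
  Posw (pos_red (raw_word rep a)) = Posw (pos_red (raw_word rep (fa a))).
Proof.
rewrite !raw_wordE !pos_redE.
set WW1 := map (rwf rep a) _; set WW2 := map (rwf rep (fa a)) _.
have HR : forall o, Rr (rwf rep a o) (rwf rep (fa a) o).
  move=> o; case: (boolP (AB n lx (code a) o)) => H; last by rewrite F2 // /Rr eqxx.
  by rewrite F1 // F1' // /Rr !oppr_lt0 orbT.
set e1 := fun o => hh WW1 (rwf rep a o); set e2 := fun o => hh WW2 (rwf rep (fa a) o).
have EAB1 (o : 'I_n) : AB n lx (code a) o -> e1 o = - Posz (code a o).+1.
  by move=> H; rewrite /e1 F1 // hh_neg // oppr_le0.
have EAB2 (o : 'I_n) : AB n lx (code a) o -> e2 o = - Posz (w' n lx (code a) o).+1.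
  by move=> H; rewrite /e2 F1' // hh_neg // oppr_le0.
have EN (o : 'I_n) : ~~ AB n lx (code a) o -> e2 o = e1 o.
  by move=> H; rewrite /e1 /e2 F2 // /WW1 /WW2 (hh_eq _ _ HR).
have EN2 (o : 'I_n) : ~~ AB n lx (code a) o -> (e1 o != - Posz lx.+1) && (e1 o != - Posz lx.+2).
  move=> H; case: (ltrP (rwf rep a o) 0) => Hl.
    by rewrite /e1 hh_neg ?ltW // F3.
  have : 0 <= e1 o.
    rewrite /e1; case: (ltrP 0 (rwf rep a o)) => Hp; first exact: hh_nn.
    by rewrite hh_neg.
  move=> h; apply/andP; split; apply/eqP => E; move: h; rewrite E oppr_ge0 //.
have ABc (o : 'I_n) : AB n lx (code a) o -> (code a o = lx \/ code a o = lx.+1)%N.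
  by rewrite AB_E => /andP[_] /orP[] /eqP; auto.
have ABw (o : 'I_n) : AB n lx (code a) o -> (w' n lx (code a) o = lx \/ w' n lx (code a) o = lx.+1)%N.
  by rewrite -AB_w' => /andP[_] /orP[] /eqP; auto.
split.
  apply: DESw_map => o1 o2 Ho.
  case: (boolP (AB n lx (code a) o1)) => h1; case: (boolP (AB n lx (code a) o2)) => h2.
  - rewrite !EAB1 // !EAB2 // !ltrN2 !ltz_nat !ltnS Ho W2 //; by rewrite -Ho.
  - rewrite (EN o2) // (EAB1 o1) // (EAB2 o1) //.
    have := EN2 _ h2; case: (ABc _ h1) => ->; case: (ABw _ h1) => ->; lia.
  - rewrite (EN o1) // (EAB1 o2) // (EAB2 o2) //.
    have := EN2 _ h1; case: (ABc _ h2) => ->; case: (ABw _ h2) => ->; lia.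
  - by rewrite !EN.
rewrite /Posw; apply: filter_R => // o.
case: (boolP (AB n lx (code a) o)) => h; last by rewrite EN // /Rr eqxx.
by rewrite /Rr EAB1 // EAB2 // !oppr_lt0 orbT.
Qed.

End Adj.

Section Final.
Variables (n k : nat).

Definition Qt (tau : {perm 'I_k.-1}) := forall m : 'I_k -> nat,
  exists f : arr n k -> arr n k,
    {in Arr_m n m &, injective f} /\
    f @: Arr_m n m = Arr_m n (perm_arr tau m) /\
    {in Arr_m n m, forall a,
        DES a = DES (f a) /\ DEZ a = DEZ (f a) /\ Der a = Der (f a)}.

Lemma Arr_m_ext (m1 m2 : 'I_k -> nat) : m1 =1 m2 -> Arr_m n m1 = Arr_m n m2.
Proof.
move=> H; apply/setP => a; rewrite !inE; congr andb.
by apply: eq_forallb => j; rewrite H.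
Qed.

Lemma perm_arr1 (m : 'I_k -> nat) : perm_arr 1 m =1 m.
Proof.
move=> j; rewrite /perm_arr; case: insubP => [j' _ Hv|] //.
by congr m; apply: val_inj; rewrite /= perm1 Hv.
Qed.

Lemma perm_arrM (s t : {perm 'I_k.-1}) (m : 'I_k -> nat) : perm_arr (s * t) m =1 perm_arr s (perm_arr t m).
Proof.
move=> j; rewrite /perm_arr; case: insubP => [j' _ Hv|Hn].
  by rewrite /= valK permM.
by [].
Qed.

Lemma Q1 : Qt 1.
Proof.
move=> m; exists id; split; first by move=> a b _ _.
split; last by [].
by rewrite imset_id (Arr_m_ext (perm_arr1 m)).
Qed.

Lemma QM s t : Qt s -> Qt t -> Qt (s * t).
Proof.
move=> Qs Qt_ m.
have [f [fi [fim fs]]] := Qt_ m.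
have [g [gi [gim gs]]] := Qs (perm_arr t m).
have fin a : a \in Arr_m n m -> f a \in Arr_m n (perm_arr t m).
  by move=> h; rewrite -fim; apply: imset_f.
exists (g \o f); split.
  move=> a b ha hb /= /gi; rewrite !fin // => /(_ isT isT) /fi; exact.
split.
  by rewrite imset_comp fim gim (Arr_m_ext (perm_arrM s t m)).
move=> a ha; have [h1 [h2 h3]] := fs a ha; have [h4 [h5 h6]] := gs (f a) (fin a ha).
by rewrite /= h1 h2 h3.
Qed.

Lemma Qadj (x y : 'I_k.-1) : val y = (val x).+1 -> Qt (tperm x y).
Proof.
move=> Hxy m; exists (fa x y); split.
  by move=> a b _ _; apply: (can_inj (faK Hxy)).
split.
  apply/eqP; rewrite eqEsubset; apply/andP; split.
    by apply/subsetP => b /imsetP[a ha ->]; apply: fa_Arr_m.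
  apply/subsetP => b hb; rewrite -(faK Hxy b); apply: imset_f.
  have := fa_Arr_m Hxy hb.
  rewrite (@Arr_m_ext _ m) //.
  by move=> j; rewrite -perm_arrM tperm2 perm_arr1.
move=> a _.
have [d1 d2] := @stat_rep n k x y Hxy (fun j : 'I_k => j.+1 != k) ltac:(move=> j /=; lia) a.
have [d3 d4] := @stat_rep n k x y Hxy (fun _ => true) ltac:(by []) a.
by rewrite /DES /DEZ /Der /pf /df d1 d3 d4.
Qed.

Lemma Qtperm (x y : 'I_k.-1) : Qt (tperm x y).
Proof.
wlog le : x y / val x <= val y.
  move=> H; case: (leqP (val x) (val y)) => h; first exact: H.
  by rewrite tpermC; apply: H; apply: ltnW.
move: le; rewrite leq_eqVlt => /orP[/eqP /val_inj ->|]; first by rewrite tperm1; exact: Q1.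
move=> lt.
have [d Hd] : exists d, val y = val x + d.+1 by exists (val y - val x).-1; lia.
elim: d y Hd {lt} => [|d IH] y Hd; first by apply: Qadj; lia.
have Hz : (val y).-1 < k.-1 by have := ltn_ord y; simpl in *; lia.
pose z := Ordinal Hz.
have IHz := IH z ltac:(simpl in *; lia).
have -> : tperm x y = (tperm z y * (tperm x z * tperm z y))%g.
  have := tpermJ x z (tperm z y).
  rewrite tpermL tpermD; last 2 first.
  - by apply/eqP => /(congr1 val); simpl in *; lia.
  - by apply/eqP => /(congr1 val); simpl in *; lia.
  by rewrite /conjg tpermV => <-.
apply: QM; first apply: Qadj; first by simpl in *; lia.
apply: QM => //; apply: Qadj; simpl in *; lia.
Qed.

Lemma Qall tau : Qt tau.
Proof.
have [ts -> _] := prod_tpermP tau.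
elim: ts => [|t ts IH]; first by rewrite big_nil; exact: Q1.
by rewrite big_cons; apply: QM => //; apply: Qtperm.
Qed.

End Final.

Theorem lemma2p3 (n k : nat) (m : 'I_k -> nat) (tau : {perm 'I_k.-1}) :
  0 < n -> 0 < k ->
  exists f : arr n k -> arr n k,
    {in Arr_m n m &, injective f} /\
    f @: Arr_m n m = Arr_m n (perm_arr tau m) /\
    {in Arr_m n m, forall a,
        DES a = DES (f a) /\ DEZ a = DEZ (f a) /\ Der a = Der (f a)}.
Proof. by move=> _ _; apply: Qall. Qed.
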